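(* Let $I,S\ge 0$ be integers and consider the pairing process described in the context. If $j>\lfloor I/2\rfloor$ or $j<L(I,S)$, then no possible wiring has exactly $j$ bb-pairings. If $L(I,S)\le j\le\lfloor I/2\rfloor$, then every possible wiring with exactly $j$ bb-pairings occurs with probability $$\prod_{k=0}^{I-j-1-z}\frac{1}{I+S-1-2k},$$ where $z=1$ if $(I,S,j)$ is in the dagger case and $z=0$ otherwise.
   Context: Pairing process: there are $I$ infected devices $b_1,\dots,b_I$ and $S$ clean devices $w_1,\dots,w_S$. For $t=1,\dots,I$ in this order: if $b_t$ is not yet paired and at least one device other than $b_t$ is not yet paired, then $b_t$ chooses one of the currently unpaired devices other than itself uniformly at random, independently of previous choices, and becomes paired with it; otherwise $b_t$ does nothing. Each device belongs to at most one pair. The wiring is the final set of pairs; a bb-pairing is a pair consisting of two infected devices; a wiring is possible if it occurs with positive probability. $L(I,S)=0$ if $I\le S$; $L(I,S)=\frac{I-S}{2}$ if $I>S$ and $I-S$ is even; $L(I,S)=\frac{I-S-1}{2}$ if $I>S$ and $I-S$ is odd. $(I,S,j)$ is in the dagger case if $I>S$, $I+S$ is odd and $j=\frac{I-S-1}{2}$. *)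

(* Defs.v *)
From mathcomp Require Import all_boot all_order all_algebra.
Unset Printing Implicit Defensive.
Import Order.TTheory GRing.Theory Num.Theory.
Local Open Scope ring_scope.

(* Devices are 'I_(I+S): index d < I is the infected device b_(d+1),
   index I + i is the clean device w_(i+1). *)
Definition device (I S : nat) := 'I_(I + S).
Definition wiring (I S : nat) := {set {set 'I_(I + S)}}.

(* wp I S k t P Ws W : probability that, running the remaining k steps
   starting with the step of infected device with index t (0-based), from the
   state where P is the set of already paired devices and Ws the current set
   of pairs, the final wiring is exactly W. *)
Fixpoint wp (I S : nat) (k t : nat) (P : {set 'I_(I + S)})
    (Ws : {set {set 'I_(I + S)}}) (W : {set {set 'I_(I + S)}}) : rat :=
  match k with
  | 0 => (Ws == W)%:R
  | k'.+1 =>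
    match [pick b : 'I_(I + S) | val b == t] with
    | Some b =>
      let C := [set d : 'I_(I + S) | (d \notin P) && (d != b)] in
      if (b \notin P) && (0 < #|C|)%N then
        \sum_(d in C) (#|C|%:R)^-1 * wp I S k' t.+1 (d |: (b |: P)) ([set b; d] |: Ws) W
      else wp I S k' t.+1 P Ws W
    | None => wp I S k' t.+1 P Ws W
    end
  end.

Definition wiring_prob (I S : nat) (W : {set {set 'I_(I + S)}}) : rat :=
  wp I S I 0 set0 set0 W.

Definition possible (I S : nat) (W : {set {set 'I_(I + S)}}) : Prop :=
  0 < wiring_prob I S W.

Definition bb (I S : nat) (W : {set {set 'I_(I + S)}}) : nat :=
  #|[set p in W | p \subset [set d : 'I_(I + S) | (val d < I)%N]]|.

Definition L (I S : nat) : nat :=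
  if (I <= S)%N then 0%N
  else if ~~ odd (I - S) then ((I - S) %/ 2)%N
  else ((I - S - 1) %/ 2)%N.

Definition dagger (I S j : nat) : bool :=
  [&& (S < I)%N, odd (I + S) & j == ((I - S - 1) %/ 2)%N].

Definition wprod (I S j : nat) : rat :=
  let z := (if dagger I S j then 1 else 0)%N in
  \prod_(k < I - j - z) ((I + S)%:R - 1 - 2 * k%:R)^-1.

(* Main.v *)
Require Import Defs.
From mathcomp Require Import all_boot all_order all_algebra.
From mathcomp Require Import zify ring.
Import Order.TTheory GRing.Theory Num.Theory.
Local Open Scope ring_scope.

Definition Inf (I S : nat) : {set 'I_(I + S)} := [set d : 'I_(I + S) | (val d < I)%N].
Definition bbc (I S : nat) (Ws : {set {set 'I_(I + S)}}) : nat :=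
  #|[set p in Ws | p \subset Inf I S]|.
Definition Uset (I S t : nat) (P : {set 'I_(I + S)}) : {set 'I_(I + S)} :=
  [set d : 'I_(I + S) | (val d < t)%N && (d \notin P)].
Definition Inv (I S t : nat) (P : {set 'I_(I + S)}) (Ws : {set {set 'I_(I + S)}}) : Prop :=
  [/\ forall q, q \in Ws -> q \subset P,
      forall q r x, q \in Ws -> r \in Ws -> x \in q -> x \in r -> q = r,
      #|P| = (2 * #|Ws|)%N,
      #|P :&: Inf I S| = (#|Ws| + bbc I S Ws)%N
    & Uset I S t P = set0 \/ (#|Uset I S t P| = 1 /\ (#|P|).+1 = I + S)%N ].

Lemma U_empty I S t P Ws (b : 'I_(I + S)) :
  Inv I S t P Ws -> val b = t -> b \notin P -> Uset I S t P = set0.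
Proof.
case=> _ _ _ _ [//|[H1 HP]] Hb bP.
have /cards1P [x Hx] : #|Uset I S t P| == 1%N by apply/eqP.
have xU : x \in Uset I S t P by rewrite Hx set11.
move: xU; rewrite inE => /andP [xt xP].
have xb : x != b by apply/eqP => E; move: xt; rewrite E Hb ltnn.
have Hsub : [set x; b] \subset ~: P.
  by apply/subsetP => y; rewrite !inE => /orP [] /eqP ->.
have H2 : (2 <= #|~: P|)%N by have := subset_leq_card Hsub; rewrite cards2 xb.
have HC : (#|P| + #|~: P| = I + S)%N by rewrite cardsC card_ord.
exfalso; lia.
Qed.

Lemma inv_skip I S t P Ws (b : 'I_(I + S)) :
  Inv I S t P Ws -> val b = t ->
  (b \in P \/ #|[set d : 'I_(I + S) | (d \notin P) && (d != b)]| = 0%N) ->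
  Inv I S t.+1 P Ws.
Proof.
move=> Hinv Hb Hc.
case: (Hinv) => H1 H2 H3 H4 H5; split => //.
case: (boolP (b \in P)) => bP.
- have -> : Uset I S t.+1 P = Uset I S t P.
    apply/setP => e; rewrite !inE ltnS leq_eqVlt.
    case: (eqVneq (val e) t) => He /=; last by [].
    have -> : e = b by apply: val_inj; rewrite He Hb.
    by rewrite bP !andbF.
  exact: H5.
- case: Hc => [bP'|HC]; first by rewrite bP' in bP.
  have U0 := @U_empty _ _ _ _ _ b Hinv Hb bP.
  have HU : Uset I S t.+1 P = [set b].
    apply/setP => e; rewrite !inE ltnS leq_eqVlt.
    case: (eqVneq (val e) t) => He /=.
    + have -> : e = b by apply: val_inj; rewrite He Hb.
      by rewrite bP eqxx.
    + have eb : e != b by apply/eqP => E; move: He; rewrite E Hb eqxx.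
      rewrite (negbTE eb).
      have : e \notin Uset I S t P by rewrite U0 inE.
      by rewrite inE negb_and negbK; case/orP => [/negbTE -> | ->]; rewrite ?andbF.
  right; rewrite HU cards1; split => //.
  have HC0 := cards0_eq HC.
  have HcP : ~: P = [set b].
    apply/setP => e; rewrite !inE.
    case: (eqVneq e b) => [->|eb]; first by [].
    apply/negbTE; apply/negP => eP.
    have : e \in [set d : 'I_(I + S) | (d \notin P) && (d != b)] by rewrite inE eP eb.
    by rewrite HC0 inE.
  have HC' : (#|P| + #|~: P| = I + S)%N by rewrite cardsC card_ord.
  rewrite HcP cards1 in HC'; lia.
Qed.

Lemma card_sep_U1 (T : finType) (x : T) (A : {set T}) (Q : pred T) :
  x \notin A -> #|[set y in x |: A | Q y]| = (Q x + #|[set y in A | Q y]|)%N.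
Proof.
move=> xA; case Qx: (Q x).
- have -> : [set y in x |: A | Q y] = x |: [set y in A | Q y].
    apply/setP => y; rewrite !inE; case: eqVneq => [->|] //=; by rewrite ?Qx ?(negbTE xA).
  by rewrite cardsU1 inE (negbTE xA).
- have -> : [set y in x |: A | Q y] = [set y in A | Q y].
    apply/setP => y; rewrite !inE; case: eqVneq => [->|] //=; by rewrite ?Qx ?(negbTE xA).
  by [].
Qed.

Lemma cardsU1I (T : finType) (x : T) (A B : {set T}) :
  x \notin A -> #|(x |: A) :&: B| = ((x \in B) + #|A :&: B|)%N.
Proof.
move=> xA; case xB: (x \in B).
- have -> : (x |: A) :&: B = x |: (A :&: B).
    apply/setP => y; rewrite !inE; case: eqVneq => [->|] //=; by rewrite ?xB ?(negbTE xA).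
  by rewrite cardsU1 inE (negbTE xA).
- have -> : (x |: A) :&: B = A :&: B.
    apply/setP => y; rewrite !inE; case: eqVneq => [->|] //=; by rewrite ?xB ?(negbTE xA).
  by [].
Qed.

Lemma inv_add I S t P Ws (b d : 'I_(I + S)) :
  Inv I S t P Ws -> val b = t -> (t < I)%N -> b \notin P -> d \notin P -> d != b ->
  Inv I S t.+1 (d |: (b |: P)) ([set b; d] |: Ws).
Proof.
move=> Hinv Hb tI bP dP db.
have U0 := @U_empty _ _ _ _ _ b Hinv Hb bP.
case: Hinv => H1 H2 H3 H4 H5.
have nW : [set b; d] \notin Ws.
  apply/negP => /H1 /subsetP /(_ b); rewrite !inE eqxx /= => /(_ isT).
  by rewrite (negbTE bP).
have sP : P \subset d |: (b |: P) by apply/subsetP => y yP; rewrite !inE yP !orbT.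
split.
- move=> q; rewrite in_setU1 => /orP [/eqP -> | qW].
  + by apply/subsetP => y; rewrite !inE => /orP [] /eqP ->; rewrite eqxx ?orbT.
  + exact: subset_trans (H1 q qW) sP.
- have key : forall r x, r \in Ws -> x \in [set b; d] -> x \in r -> False.
    move=> r x rW; rewrite !inE => /orP [] /eqP -> /(subsetP (H1 r rW)).
    + by rewrite (negbTE bP).
    + by rewrite (negbTE dP).
  move=> q r x; rewrite !inE => /orP [/eqP -> | qW] /orP [/eqP -> | rW] xq xr //.
  + by case: (key r x rW xq).
  + by case: (key q x qW xr).
  + exact: H2 qW rW xq xr.
- have dbP : d \notin b |: P by rewrite !inE negb_or db dP.
  rewrite cardsU1 dbP cardsU1 bP H3 cardsU1 nW /=; lia.
- have dbP : d \notin b |: P by rewrite !inE negb_or db dP.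
  have bI : b \in Inf I S by rewrite inE Hb.
  rewrite cardsU1I // cardsU1I // H4 /bbc card_sep_U1 // cardsU1 nW.
  rewrite subUset !sub1set bI /= -/(bbc I S Ws); lia.
- left; apply/setP => e; rewrite !inE ltnS leq_eqVlt.
  case: (eqVneq (val e) t) => He /=.
  + have -> : e = b by apply: val_inj; rewrite He Hb.
    by rewrite eqxx !orbT.
  + have : e \notin Uset I S t P by rewrite U0 inE.
    rewrite inE negb_and negbK => /orP [/negbTE -> // | eP].
    by rewrite eP !orbT andbF.
Qed.

Definition fac (I S i : nat) : rat := ((I + S)%:R - 1 - 2 * i%:R)^-1.

Lemma wp_main I S k : forall t P Ws W, (t + k = I)%N -> Inv I S t P Ws ->
  wp I S k t P Ws W != 0 ->
  [/\ exists Pf, Inv I S I Pf W, Ws \subset W &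
      wp I S k t P Ws W = \prod_(i < #|W| - #|Ws|) fac I S (#|Ws| + i)].
Proof.
elim: k => [|k IH] t P Ws W.
- rewrite addn0 => Ht; subst t => Hinv /=.
  case: (eqVneq Ws W) => [<- _|_]; last by rewrite eqxx.
  split; [by exists P | exact: subxx | by rewrite subnn big_ord0].
- move=> Htk Hinv /=.
  have tI : (t < I)%N by lia.
  have tN : (t < I + S)%N by lia.
  case: pickP => [b /eqP Hb | Hn]; last by have := Hn (Ordinal tN); rewrite /= eqxx.
  have Htk' : (t.+1 + k)%N = I by rewrite addSnnS.
  set C := [set d | d \notin P & d != b].
  case: ifP => [/andP [bP HC] | Hif]; last first.
    have Hinv' : Inv I S t.+1 P Ws.
      apply: (@inv_skip _ _ _ _ _ b Hinv Hb).
      case: (boolP (b \in P)) => bP; [by left | right].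
      by move: Hif; rewrite bP /= => /negbT; rewrite -leqNgt leqn0 => /eqP.
    exact: IH.
  move=> Hs.
  have Hinvd : forall d, d \in C -> Inv I S t.+1 (d |: (b |: P)) ([set b; d] |: Ws).
    by move=> d; rewrite inE => /andP [dP db]; apply: (@inv_add _ _ _ _ _ b d Hinv Hb tI bP dP db).
  have [d0 d0C Fd0] : exists2 d0, d0 \in C &
      wp I S k t.+1 (d0 |: (b |: P)) ([set b; d0] |: Ws) W != 0.
    case: (boolP [exists d in C, wp I S k t.+1 (d |: (b |: P)) ([set b; d] |: Ws) W != 0]).
      by case/exists_inP => d0 ? ?; exists d0.
    move=> H; exfalso; move: Hs; rewrite big1 ?eqxx // => d dC.
    move: H; rewrite negb_exists_in => /forall_inP /(_ d dC); rewrite negbK => /eqP ->.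
    by rewrite mulr0.
  have [[Pf InvF] sub0 val0] := IH _ _ _ W Htk' (Hinvd d0 d0C) Fd0.
  have bd0W : [set b; d0] \in W by apply: (subsetP sub0); rewrite in_setU1 eqxx.
  have others : forall d, d \in C -> d != d0 ->
      wp I S k t.+1 (d |: (b |: P)) ([set b; d] |: Ws) W = 0.
    move=> d dC dd0; apply/eqP; apply: contraNT dd0 => Hd.
    have [_ sub' _] := IH _ _ _ W Htk' (Hinvd d dC) Hd.
    have bdW : [set b; d] \in W by apply: (subsetP sub'); rewrite in_setU1 eqxx.
    case: InvF => _ Hm _ _ _.
    have E := Hm _ _ b bdW bd0W (set21 b d) (set21 b d0).
    have : d \in [set b; d0] by rewrite -E set22.
    by move: dC; rewrite !inE => /andP [_ db]; rewrite (negbTE db).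
  rewrite (bigD1 d0) //= big1 ?addr0; last first.
    by move=> d /andP [dC dd0]; rewrite others ?mulr0.
  case: (Hinv) => H1 H2 H3 H4 H5.
  have nW : [set b; d0] \notin Ws.
    apply/negP => /H1 /subsetP /(_ b); rewrite !inE eqxx /= => /(_ isT).
    by rewrite (negbTE bP).
  have cW : (#|Ws|.+1 <= #|W|)%N.
    by have := subset_leq_card sub0; rewrite cardsU1 nW.
  split.
  - by exists Pf.
  - apply: subset_trans sub0; apply/subsetP => q qW; by rewrite in_setU1 qW orbT.
  rewrite val0 cardsU1 nW /=.
  have -> : (#|W| - #|Ws| = (#|W| - #|Ws|.+1).+1)%N by lia.
  rewrite big_ord_recl addn0; congr (_ * _); last first.
    by apply: eq_bigr => i _; rewrite lift0; congr (fac _ _ _); case: i => n /= _; lia.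
  have bcP : b \in ~: P by rewrite inE.
  have HCc : #|~: P| = #|C|.+1.
    rewrite (cardsD1 b) bcP; congr (_.+1); apply: eq_card => e; rewrite !inE andbC.
    by [].
  have HPc : (#|P| + #|~: P| = I + S)%N by rewrite cardsC card_ord.
  have E : (I + S)%N = (#|C| + 1 + 2 * #|Ws|)%N by lia.
  rewrite /fac.
  have -> : ((I + S)%:R : rat) = ((#|C| + 1 + 2 * #|Ws|)%N)%:R by rewrite -E.
  rewrite !natrD; congr (GRing.inv _).
  ring.
Qed.

Lemma card_Inf I S : #|Inf I S| = I.
Proof.
have inj : injective (widen_ord (leq_addr S I)).
  by move=> x y /(congr1 val) /= /val_inj.
have -> : Inf I S = widen_ord (leq_addr S I) @: [set: 'I_I].
  apply/setP => d; rewrite inE; apply/idP/imsetP.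
  - move=> Hd; exists (Ordinal Hd); first by rewrite inE.
    by apply: val_inj.
  - by case=> i _ ->; rewrite /= ltn_ord.
by rewrite card_imset // cardsT card_ord.
Qed.

Lemma key I S (W : {set {set 'I_(I + S)}}) : possible I S W ->
  exists m j u, [/\ bb I S W = j,
    wiring_prob I S W = \prod_(i < m) fac I S i,
    (2 * m <= I + S)%N, (m + j + u = I)%N & (j <= m)%N /\
    (u = 0 \/ (u = 1 /\ 2 * m + 1 = I + S))%N].
Proof.
move=> HW.
have Hinv0 : Inv I S 0 set0 set0.
  split.
  - by move=> q; rewrite inE.
  - by move=> q r x; rewrite inE.
  - by rewrite !cards0.
  - rewrite set0I cards0 /bbc.
    have -> : [set p in (set0 : {set {set 'I_(I + S)}}) | p \subset Inf I S] = set0.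
      by apply/setP => p; rewrite !inE.
    by rewrite cards0.
  - by left; apply/setP => d; rewrite !inE.
have nz : wiring_prob I S W != 0 by rewrite lt0r_neq0.
have [[Pf [H1 H2 H3 H4 H5]] _ Hval] := @wp_main I S I 0 set0 set0 W (add0n I) Hinv0 nz.
exists #|W|, (bbc I S W), #|Uset I S I Pf|; split => //.
- rewrite /wiring_prob Hval cards0 subn0; apply: eq_bigr => i _; by rewrite add0n.
- have := subset_leq_card (subsetT Pf); rewrite cardsT card_ord; lia.
- have -> : Uset I S I Pf = Inf I S :\: Pf.
    by apply/setP => d; rewrite !inE andbC.
  have := cardsID Pf (Inf I S); rewrite setIC H4 card_Inf; lia.
- split.
  + apply: subset_leq_card; apply/subsetP => p; rewrite inE => /andP [].
    by [].
  + case: H5 => [->|[-> HP]]; first by left; rewrite cards0.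
    by right; split => //; lia.
Qed.

Theorem lemma2 (I S j : nat) :
  (((I %/ 2 < j)%N \/ (j < L I S)%N) ->
     forall W : {set {set 'I_(I + S)}}, possible I S W -> bb I S W <> j)
  /\
  ((L I S <= j)%N -> (j <= I %/ 2)%N ->
     forall W : {set {set 'I_(I + S)}}, possible I S W -> bb I S W = j ->
       wiring_prob I S W = wprod I S j).
Proof.
split.
- move=> Hj W HW Hbb.
  have [m [j' [u [E1 _ A1 A2 [A3 A4]]]]] := @key I S W HW.
  have Ej : j' = j by rewrite -E1 Hbb.
  subst j'.
  case: Hj => Hj; first by lia.
  move: Hj; rewrite /L; case: ifP => HIS //.
  case: ifP => Hodd Hj.
  + have M1 : ((I - S) %% 2 = 0)%N by rewrite modn2; move/negbTE: Hodd => ->.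
    case: A4 => [? | [? ?]]; lia.
  + lia.
- move=> HL HjI W HW Hbb.
  have [m [j' [u [E1 Hv A1 A2 [A3 A4]]]]] := @key I S W HW.
  have Ej : j' = j by rewrite -E1 Hbb.
  subst j'.
  rewrite Hv /wprod.
  suff -> : (I - j - (if dagger I S j then 1 else 0) = m)%N by [].
  case: (boolP (dagger I S j)) => Hd.
  + move/and3P: Hd => [SI Ho /eqP Hj].
    case: A4 => [? | [? ?]]; lia.
  + case: A4 => [? | [? Hm]]; first by lia.
    exfalso; apply: (negP Hd); apply/and3P; split.
    * lia.
    * by rewrite -Hm addn1 /= mul2n odd_double.
    * apply/eqP; clear HL HjI Hv HW Hbb; rewrite Ej in A2 A3; lia.
Qed.
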